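(* Let $n\ge3$ and let $\mathcal{G}$ be the directed line graph on nodes $\{1,\dots,n\}$ with edges $(i,i+1)$ and $(i+1,i)$ for $i=1,\dots,n-1$ together with self-loops $(i,i)$ at every node, and let $\tau\in\mathbb{Z}$ with $n-1\le\tau\le 2n-3$. If $P^*$ is an optimal solution of $\max_P\min_{i,j}\mathbb{P}(T_{ij}(P)\le\tau)$ over all Markov chain strategies $P$ conforming to $\mathcal{G}$, then $\mathbb{P}(T_{1n}(P^* )\le\tau)=\mathbb{P}(T_{n1}(P^* )\le\tau)$.
   Context: A Markov chain strategy conforming to $\mathcal{G}=(V,\mathcal{E})$ is a row-stochastic nonnegative $P=(p_{ij})$ with $p_{ij}=0$ for $(i,j)\notin\mathcal{E}$. For the Markov chain $(X_k)$ with transition matrix $P$, $T_{ij}=\min\{k\ge1:X_k=j\}$ given $X_0=i$. *)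

(* Defs.v *)
(* R : realType, states 'I_n (node k+1 of the paper = ordinal k). *)
From mathcomp Require Import all_boot all_order all_algebra.
From mathcomp Require Import reals.
Set Implicit Arguments. Unset Strict Implicit. Unset Printing Implicit Defensive.
Import Order.TTheory GRing.Theory Num.Theory.
Local Open Scope ring_scope.

Definition line_edge (n : nat) (i j : 'I_n) : bool :=
  (i == j) || (i.+1 == j :> nat) || (j.+1 == i :> nat).

Definition line_strategy (R : realType) (n : nat) (P : 'M[R]_n) : Prop :=
  (forall i j, 0 <= P i j) /\
  (forall i, \sum_j P i j = 1) /\
  (forall i j, ~~ line_edge i j -> P i j = 0).

(* avoid P k i j = P(X_1 <> j, ..., X_k <> j | X_0 = i). *)
Fixpoint avoid (R : realType) (n : nat) (P : 'M[R]_n) (k : nat) (i j : 'I_n) : R :=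
  match k with
  | 0 => 1
  | k'.+1 => \sum_(h : 'I_n | h != j) P i h * avoid P k' h j
  end.

(* hit_le P tau i j = P(T_ij <= tau), T_ij = min{k >= 1 : X_k = j}, X_0 = i. *)
Definition hit_le (R : realType) (n : nat) (P : 'M[R]_n) (tau : nat) (i j : 'I_n) : R :=
  1 - avoid P tau i j.

(* min_{i,j} P(T_ij <= tau); the state space is nonempty and all values
   are <= 1, so the neutral element 1 does not affect the minimum. *)
Definition min_hit (R : realType) (n : nat) (P : 'M[R]_n) (tau : nat) : R :=
  \big[Num.min/1]_(i : 'I_n) \big[Num.min/1]_(j : 'I_n) hit_le P tau i j.

Definition optimal_line (R : realType) (n : nat) (tau : nat) (P : 'M[R]_n) : Prop :=
  line_strategy P /\
  forall Q : 'M[R]_n, line_strategy Q -> min_hit Q tau <= min_hit P tau.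

(* Main.v *)
Require Import Defs.
From mathcomp Require Import all_boot all_order all_algebra.
From mathcomp Require Import reals.
From mathcomp Require Import ring lra zify.
Set Implicit Arguments. Unset Strict Implicit. Unset Printing Implicit Defensive.
Import Order.TTheory GRing.Theory Num.Theory.
Local Open Scope ring_scope.

Definition W (R : realType) (n : nat) (P : 'M[R]_n) (k : nat) (y j : 'I_n) : R :=
  if y == j then 1 else 1 - avoid P k y j.

Lemma avoid_bounds (R : realType) (n : nat) (P : 'M[R]_n) k i j :
  line_strategy P -> 0 <= avoid P k i j <= 1.
Proof.
move=> [h0 [h1 _]]; elim: k i => [|k IH] i /=; first by rewrite ler01 lexx.
apply/andP; split.
  by apply: sumr_ge0 => h _; apply: mulr_ge0 => //; case/andP: (IH h).
rewrite -(h1 i) [X in _ <= X](bigD1 j) //=.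
apply: (@le_trans _ _ (\sum_(h | h != j) P i h)).
  apply: ler_sum => h _; rewrite -[X in _ <= X]mulr1; apply: ler_wpM2l => //.
  by case/andP: (IH h).
by rewrite lerDr.
Qed.

Lemma W_bounds (R : realType) (n : nat) (P : 'M[R]_n) k y j :
  line_strategy P -> 0 <= W P k y j <= 1.
Proof.
move=> hP; rewrite /W; case: eqP => _; first by rewrite ler01 lexx.
have /andP[a b] := avoid_bounds k y j hP.
by apply/andP; split; lra.
Qed.

Lemma W_jj (R : realType) (n : nat) (P : 'M[R]_n) k j : W P k j j = 1.
Proof. by rewrite /W eqxx. Qed.

Lemma W_0 (R : realType) (n : nat) (P : 'M[R]_n) y j : y != j -> W P 0 y j = 0.
Proof. by rewrite /W => /negbTE ->; rewrite /= subrr. Qed.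

Lemma hit_le_W (R : realType) (n : nat) (P : 'M[R]_n) k y j :
  line_strategy P -> hit_le P k.+1 y j = \sum_h P y h * W P k h j.
Proof.
move=> [h0 [h1 _]]; rewrite /hit_le /=.
rewrite [RHS](bigD1 j) //= W_jj mulr1.
have -> : \sum_(h | h != j) P y h * W P k h j =
          \sum_(h | h != j) P y h - \sum_(h | h != j) P y h * avoid P k h j.
  rewrite -sumrB; apply: eq_bigr => h /negbTE hj.
  by rewrite /W hj mulrBr mulr1.
rewrite -(h1 y) (bigD1 j) //=; ring.
Qed.

Lemma W_rec (R : realType) (n : nat) (P : 'M[R]_n) k y j :
  line_strategy P -> y != j -> W P k.+1 y j = \sum_h P y h * W P k h j.
Proof.
move=> hP hy; rewrite -hit_le_W // /W (negbTE hy) //.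
Qed.

Lemma hit_W (R : realType) (n : nat) (P : 'M[R]_n) k y j :
  y != j -> hit_le P k y j = W P k y j.
Proof. by move=> hy; rewrite /W (negbTE hy). Qed.

Lemma sum_nb_le (R : realType) (n : nat) (P : 'M[R]_n) y (F G : 'I_n -> R) :
  line_strategy P -> (forall z, line_edge y z -> F z <= G z) ->
  \sum_z P y z * F z <= \sum_z P y z * G z.
Proof.
move=> [h0 [h1 h2]] hFG; apply: ler_sum => z _.
case: (boolP (line_edge y z)) => e.
  by apply: ler_wpM2l => //; apply: hFG.
by rewrite h2 // !mul0r.
Qed.

Lemma sum_nb_const (R : realType) (n : nat) (P : 'M[R]_n) y (c : R) :
  line_strategy P -> \sum_z P y z * c = c.
Proof. by move=> [h0 [h1 h2]]; rewrite -mulr_suml h1 mul1r. Qed.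

Lemma line_edgeP (n : nat) (y z : 'I_n) : line_edge y z ->
  [\/ (z : nat) = (y : nat), (z : nat) = ((y : nat)).+1 | ((z : nat)).+1 = (y : nat)].
Proof.
rewrite /line_edge => /orP[/orP[/eqP->|/eqP h]|/eqP h].
- by constructor 1.
- by constructor 2.
- by constructor 3.
Qed.

Lemma mono_gen (R : realType) (n : nat) (j : nat) (F : 'I_n -> R) :
  (forall y z : 'I_n, (z : nat) = ((y : nat)).+1 -> (j <= (y : nat))%N -> F z <= F y) ->
  forall y w : 'I_n, (j <= (y : nat))%N -> ((y : nat) <= (w : nat))%N -> F w <= F y.
Proof.
move=> h1 y w hj hyw.
have [d hd] : exists d, (w : nat) = ((y : nat) + d)%N by exists ((w : nat) - (y : nat))%N; rewrite subnKC.
elim: d w hyw hd => [|d IH] w hyw hd.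
  by have -> : w = y by apply: val_inj; rewrite /= hd addn0.
have hw1 : (((w : nat)).-1 < n)%N by have := ltn_ord w; lia.
pose w' := Ordinal hw1.
apply: (@le_trans _ _ (F w')).
  by apply: h1 => /=; lia.
by apply: IH => /=; lia.
Qed.

Lemma W_monoK (R : realType) (n : nat) (P : 'M[R]_n) k y j :
  line_strategy P -> W P k y j <= W P k.+1 y j.
Proof.
move=> hP; elim: k y => [|k IH] y.
  case: (eqVneq y j) => [->|hy]; first by rewrite !W_jj.
  by rewrite W_0 //; case/andP: (W_bounds 1 y j hP).
case: (eqVneq y j) => [->|hy]; first by rewrite !W_jj.
rewrite (W_rec _ hP hy) (W_rec _ hP hy).
by apply: sum_nb_le => // z _; apply: IH.
Qed.

Lemma W_monoK' (R : realType) (n : nat) (P : 'M[R]_n) k k' y j :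
  line_strategy P -> (k <= k')%N -> W P k y j <= W P k' y j.
Proof.
move=> hP hk; have [d ->] : exists d, k' = (k + d)%N by exists (k' - k)%N; rewrite subnKC.
elim: d => [|d IH]; first by rewrite addn0.
by apply: (le_trans IH); rewrite addnS; apply: W_monoK.
Qed.

Lemma W_shift_mono (R : realType) (n : nat) (P : 'M[R]_n) k (j : 'I_n) :
  line_strategy P ->
  (forall y z : 'I_n, (z : nat) = ((y : nat)).+1 -> ((j : nat) <= (y : nat))%N -> W P k z j <= W P k y j) /\
  (forall y z : 'I_n, (z : nat) = ((y : nat)).+1 -> ((j : nat) <= (y : nat))%N -> W P k.+1 z j <= W P k y j).
Proof.
move=> hP.
have Astep : forall k, (forall y z : 'I_n, (z : nat) = ((y : nat)).+1 -> ((j : nat) <= (y : nat))%N -> W P k z j <= W P k y j) ->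
  (forall y z : 'I_n, (z : nat) = ((y : nat)).+1 -> ((j : nat) <= (y : nat))%N -> W P k.+1 z j <= W P k y j).
  move=> k0 B1 y z hz hjy.
  have hzj : z != j by apply/eqP => e; move: hz; rewrite e; lia.
  rewrite (W_rec _ hP hzj) -[X in _ <= X](sum_nb_const z (W P k0 y j) hP).
  apply: sum_nb_le => // w /line_edgeP hw.
  apply: (mono_gen B1) => //; case: hw; lia.
elim: k => [|k [IH1 IH2]].
  split; last by apply: Astep => y z hz hjy; rewrite (@W_0 _ _ P z j);
     [by case/andP: (W_bounds 0 y j hP) | apply/eqP => e; move: hz; rewrite e; lia].
  move=> y z hz hjy; rewrite (@W_0 _ _ P z j); first by case/andP: (W_bounds 0 y j hP).
  by apply/eqP => e; move: hz; rewrite e; lia.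
have B1 : forall y z : 'I_n, (z : nat) = ((y : nat)).+1 -> ((j : nat) <= (y : nat))%N -> W P k.+1 z j <= W P k.+1 y j.
  by move=> y z hz hjy; apply: (le_trans (IH2 y z hz hjy)); apply: W_monoK.
by split => //; apply: Astep.
Qed.

Lemma W_monoY (R : realType) (n : nat) (P : 'M[R]_n) k (j : 'I_n) (y w : 'I_n) :
  line_strategy P -> ((j : nat) <= (y : nat))%N -> ((y : nat) <= (w : nat))%N -> W P k w j <= W P k y j.
Proof.
move=> hP; apply: (mono_gen (proj1 (W_shift_mono k j hP))).
Qed.

Lemma W_shift (R : realType) (n : nat) (P : 'M[R]_n) k (j : 'I_n) (y z : 'I_n) :
  line_strategy P -> (z : nat) = ((y : nat)).+1 -> ((j : nat) <= (y : nat))%N -> W P k.+1 z j <= W P k y j.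
Proof. move=> hP; exact: (proj2 (W_shift_mono k j hP)). Qed.

Lemma W_target (R : realType) (n : nat) (P : 'M[R]_n) k (f0 j y : 'I_n) :
  line_strategy P -> (f0 : nat) = 0%N -> (1 <= (j : nat))%N -> ((j : nat) <= (y : nat))%N ->
  W P k.+1 y f0 <= W P k y j.
Proof.
move=> hP hf hj1; elim: k y => [|k IH] y hjy.
  case: (eqVneq y j) => [->|hyj]; first by rewrite W_jj; case/andP: (W_bounds 1 j f0 hP).
  have hyf : y != f0 by apply/eqP => e; move: hjy; rewrite e hf; lia.
  have hyj' : (y : nat) != (j : nat) by apply/eqP => e; move/eqP: hyj; apply; apply: val_inj.
  rewrite (W_rec _ hP hyf) W_0 //.
  apply: le_trans (sum_nb_le (G := fun _ => 0) hP _) _; last by rewrite (sum_nb_const y 0 hP).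
  move=> w /line_edgeP hw.
  rewrite W_0 //; apply/eqP => e; move: hw; rewrite e hf; case; lia.
case: (eqVneq y j) => [->|hyj]; first by rewrite W_jj; case/andP: (W_bounds k.+2 j f0 hP).
have hyf : y != f0 by apply/eqP => e; move: hjy; rewrite e hf; lia.
rewrite (W_rec _ hP hyf) (W_rec _ hP hyj).
apply: sum_nb_le => // w /line_edgeP hw; apply: IH.
have : (y : nat) != (j : nat) by apply/eqP => e; move/eqP: hyj; apply; apply: val_inj.
case: hw; lia.
Qed.

Definition revm (R : realType) (n : nat) (P : 'M[R]_n) : 'M[R]_n :=
  \matrix_(i, j) P (rev_ord i) (rev_ord j).

Lemma avoid_rev (R : realType) (n : nat) (P : 'M[R]_n) k i j :
  avoid (revm P) k i j = avoid P k (rev_ord i) (rev_ord j).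
Proof.
elim: k i => [|k IH] i //=.
rewrite (reindex_inj rev_ord_inj) /=.
apply: eq_big => [h|h _]; first by rewrite (canF_eq rev_ordK).
by rewrite mxE IH rev_ordK.
Qed.

Lemma line_edge_rev (n : nat) (i j : 'I_n) :
  line_edge (rev_ord i) (rev_ord j) = line_edge i j.
Proof.
rewrite /line_edge -!val_eqE /=.
have := ltn_ord i; have := ltn_ord j.
by do ![case: eqP => ?]; lia.
Qed.

Lemma revm_strategy (R : realType) (n : nat) (P : 'M[R]_n) :
  line_strategy P -> line_strategy (revm P).
Proof.
move=> [h0 [h1 h2]]; split; [|split].
- by move=> i j; rewrite mxE.
- move=> i; rewrite (reindex_inj rev_ord_inj) /= -(h1 (rev_ord i)).
  by apply: eq_bigr => j _; rewrite mxE rev_ordK.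
- by move=> i j hij; rewrite mxE h2 // line_edge_rev.
Qed.

Lemma hit_rev (R : realType) (n : nat) (P : 'M[R]_n) k i j :
  hit_le (revm P) k i j = hit_le P k (rev_ord i) (rev_ord j).
Proof. by rewrite /hit_le avoid_rev. Qed.

Lemma W_rev (R : realType) (n : nat) (P : 'M[R]_n) k i j :
  W (revm P) k i j = W P k (rev_ord i) (rev_ord j).
Proof. by rewrite /W avoid_rev (inj_eq rev_ord_inj). Qed.

Lemma ord_ne (n : nat) (a b : 'I_n) : (a : nat) <> b -> a != b.
Proof. by move=> h; apply/eqP => e; apply: h; rewrite e. Qed.

Lemma left_bound (R : realType) (n : nat) (X : 'M[R]_n) tau (fi la i j : 'I_n) :
  line_strategy X -> (3 <= n)%N -> (fi : nat) = 0%N -> (la : nat) = n.-1 ->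
  (j < i)%N -> hit_le X tau la fi <= hit_le X tau i j.
Proof.
move=> hX hn hf hl hji.
rewrite hit_W; last by apply: ord_ne; lia.
rewrite hit_W; last by apply: ord_ne; lia.
apply: (@le_trans _ _ (W X tau la j)).
  case: (eqVneq (j : nat) 0%N) => hj0; last move/eqP: hj0 => hj0.
    have -> : j = fi by apply: val_inj; rewrite /= hj0 hf.
    by [].
  apply: (le_trans (W_monoK tau la fi hX)).
  apply: (@W_target _ _ _ tau fi j la hX hf); first by lia.
  by have := ltn_ord i; lia.
apply: W_monoY => //; first by lia.
by have := ltn_ord i; lia.
Qed.

Lemma ret_right (R : realType) (n : nat) (X : 'M[R]_n) tau (fi la i h : 'I_n) :
  line_strategy X -> (3 <= n)%N -> (1 <= tau)%N -> (fi : nat) = 0%N -> (la : nat) = n.-1 ->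
  (h : nat) = (i : nat).+1 -> hit_le X tau la fi <= W X tau.-1 h i.
Proof.
move=> hX hn ht hf hl hh.
rewrite hit_W; last by apply: ord_ne; lia.
have htau : tau = tau.-1.+1 by lia.
case: (eqVneq (i : nat) 0%N) => hi0; last move/eqP: hi0 => hi0.
  have -> : i = fi by apply: val_inj; rewrite /= hi0 hf.
  have h2p : (n.-2 < n)%N by lia.
  pose h2 := Ordinal h2p.
  rewrite {1}htau; apply: (@le_trans _ _ (W X tau.-1 h2 fi)).
    by apply: W_shift => //=; lia.
  by apply: W_monoY => //=; lia.
apply: (@le_trans _ _ (W X tau h fi)).
  by apply: W_monoY => //; have := ltn_ord h; lia.
rewrite {1}htau; apply: (@W_target _ _ _ tau.-1 fi i h hX hf); lia.
Qed.

Lemma right_bound (R : realType) (n : nat) (X : 'M[R]_n) tau (fi la i j : 'I_n) :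
  line_strategy X -> (3 <= n)%N -> (fi : nat) = 0%N -> (la : nat) = n.-1 ->
  (i < j)%N -> hit_le X tau fi la <= hit_le X tau i j.
Proof.
move=> hX hn hf hl hij.
have hr := revm_strategy hX.
have e1 : rev_ord la = fi by apply: val_inj => /=; lia.
have e2 : rev_ord fi = la by apply: val_inj => /=; lia.
have := left_bound (fi:=fi) (la:=la) (i:=rev_ord i) (j:=rev_ord j) tau hr hn hf hl.
rewrite !hit_rev !rev_ordK e1 e2; apply => //.
by rewrite /=; have := ltn_ord j; lia.
Qed.

Lemma ret_left (R : realType) (n : nat) (X : 'M[R]_n) tau (fi la i h : 'I_n) :
  line_strategy X -> (3 <= n)%N -> (1 <= tau)%N -> (fi : nat) = 0%N -> (la : nat) = n.-1 ->
  (i : nat) = (h : nat).+1 -> hit_le X tau fi la <= W X tau.-1 h i.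
Proof.
move=> hX hn ht hf hl hh.
have hr := revm_strategy hX.
have e1 : rev_ord la = fi by apply: val_inj => /=; lia.
have e2 : rev_ord fi = la by apply: val_inj => /=; lia.
have := ret_right (fi:=fi) (la:=la) (i:=rev_ord i) (h:=rev_ord h) (tau:=tau) hr hn ht hf hl.
rewrite !hit_rev W_rev !rev_ordK e1 e2; apply => //.
by rewrite /=; have := ltn_ord i; lia.
Qed.

Lemma hit_le_1 (R : realType) (n : nat) (X : 'M[R]_n) tau i j :
  line_strategy X -> hit_le X tau i j <= 1.
Proof.
move=> hX; rewrite /hit_le; have /andP[a b] := avoid_bounds tau i j hX; lra.
Qed.

Lemma all_bound (R : realType) (n : nat) (X : 'M[R]_n) tau (fi la i j : 'I_n) :
  line_strategy X -> (3 <= n)%N -> (1 <= tau)%N -> (fi : nat) = 0%N -> (la : nat) = n.-1 ->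
  Num.min (hit_le X tau fi la) (hit_le X tau la fi) <= hit_le X tau i j.
Proof.
move=> hX hn ht hf hl.
case: (ltngtP i j) => hij.
- by rewrite ge_min (right_bound tau hX hn hf hl hij).
- by rewrite ge_min (left_bound tau hX hn hf hl hij) orbT.
have -> : j = i by apply: val_inj.
have htau : tau = tau.-1.+1 by lia.
have -> : hit_le X tau i i = \sum_h X i h * W X tau.-1 h i by rewrite {1}htau hit_le_W.
rewrite -[Y in Y <= _](sum_nb_const i _ hX).
apply: sum_nb_le => // z /line_edgeP [hz|hz|hz].
- have -> : z = i by apply: val_inj.
  rewrite W_jj ge_min; apply/orP; left; exact: hit_le_1.
- by rewrite ge_min (ret_right hX hn ht hf hl hz) orbT.
- by rewrite ge_min (ret_left hX hn ht hf hl (esym hz)).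
Qed.

Lemma bigmin_le_mem (R : realType) (I : eqType) (r : seq I) (F : I -> R) i0 :
  i0 \in r -> \big[Num.min/1]_(i <- r) F i <= F i0.
Proof.
elim: r => [//|a r IH]; rewrite in_cons big_cons => /orP[/eqP->|hin].
  by rewrite ge_min lexx.
by rewrite ge_min (IH hin) orbT.
Qed.

Lemma min_hit_eq (R : realType) (n : nat) (X : 'M[R]_n) tau (fi la : 'I_n) :
  line_strategy X -> (3 <= n)%N -> (1 <= tau)%N -> (fi : nat) = 0%N -> (la : nat) = n.-1 ->
  min_hit X tau = Num.min (hit_le X tau fi la) (hit_le X tau la fi).
Proof.
move=> hX hn ht hf hl; apply/eqP; rewrite eq_le; apply/andP; split.
  rewrite le_min; apply/andP; split.
    apply: (le_trans (bigmin_le_mem _ (mem_index_enum fi))).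
    exact: (bigmin_le_mem _ (mem_index_enum la)).
  apply: (le_trans (bigmin_le_mem _ (mem_index_enum la))).
  exact: (bigmin_le_mem _ (mem_index_enum fi)).
rewrite /min_hit; apply: (big_ind (fun x => _ <= x)).
- by rewrite ge_min hit_le_1.
- by move=> x y hx hy; rewrite le_min hx hy.
move=> i _; apply: (big_ind (fun x => _ <= x)).
- by rewrite ge_min hit_le_1.
- by move=> x y hx hy; rewrite le_min hx hy.
by move=> j _; apply: all_bound.
Qed.

Definition predo (n : nat) (y : 'I_n) : 'I_n :=
  Ordinal (leq_ltn_trans (leq_pred y) (ltn_ord y)).

Definition pert (R : realType) (n : nat) (X : 'M[R]_n) (t : R) : 'M[R]_n :=
  \matrix_(y, z) ((1 - t) * X y z + t * (z == predo y)%:R).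

Lemma sum_ind (R : realType) (n : nat) (p : 'I_n) (F : 'I_n -> R) :
  \sum_z (z == p)%:R * F z = F p.
Proof.
rewrite (bigD1 p) //= eqxx mul1r big1 ?addr0 // => z /negbTE ->.
by rewrite mul0r.
Qed.

Lemma sum_pert (R : realType) (n : nat) (X : 'M[R]_n) t y (F : 'I_n -> R) :
  \sum_z pert X t y z * F z = (1 - t) * \sum_z X y z * F z + t * F (predo y).
Proof.
rewrite -(sum_ind (predo y) F) mulr_sumr mulr_sumr -big_split /=.
apply: eq_bigr => z _; rewrite mxE; ring.
Qed.

Lemma pert_strategy (R : realType) (n : nat) (X : 'M[R]_n) t :
  0 <= t <= 1 -> line_strategy X -> line_strategy (pert X t).
Proof.
move=> /andP[t0 t1] [h0 [h1 h2]]; split; [|split].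
- move=> i j; rewrite mxE; apply: addr_ge0; apply: mulr_ge0 => //; lra.
- move=> i; have := sum_pert X t i (fun _ => 1).
  under eq_bigr do rewrite mulr1.
  move=> ->; under eq_bigr do rewrite mulr1.
  rewrite h1; ring.
- move=> i j hij; rewrite mxE h2 //.
  have -> : (j == predo i) = false.
    apply/negP => /eqP e; move: hij; rewrite e /line_edge -!val_eqE /=.
    case: (nat_of_ord i) => [|m] //=.
    by rewrite eqxx !orbT.
  by rewrite mulr0 mulr0 addr0.
Qed.

Lemma sum_filter_le (R : realType) (n : nat) (F : 'I_n -> R) (j : 'I_n) :
  (forall h, 0 <= F h) -> \sum_(h | h != j) F h <= \sum_h F h.
Proof.
move=> hF; rewrite [X in _ <= X](bigD1 j) //=; rewrite lerDr; exact: hF.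
Qed.

Lemma avoid_pert (R : realType) (n : nat) (X : 'M[R]_n) t k i j :
  0 <= t <= 1 -> line_strategy X ->
  avoid (pert X t) k i j <= avoid X k i j + k%:R * t.
Proof.
move=> ht hX; have hQ := pert_strategy ht hX.
have /andP[t0 t1] := ht.
case: (hX) => [h0 [h1 h2]].
elim: k i => [|k IH] i; first by rewrite /= mul0r addr0.
rewrite /=.
apply: (@le_trans _ _ (\sum_(h | h != j) (X i h * avoid X k h j + t * (h == predo i)%:R
      + k%:R * t * pert X t i h))).
  apply: ler_sum => h _.
  have /andP[a0 a1] := avoid_bounds k h j hX.
  have /andP[b0 b1] := avoid_bounds k h j hQ.
  have q0 : 0 <= pert X t i h by case: hQ => q0 _; apply: q0.
  apply: (@le_trans _ _ (pert X t i h * (avoid X k h j + k%:R * t))).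
    by apply: ler_wpM2l => //; apply: IH.
  rewrite mxE.
  have x0 := h0 i h.
  have d0 : 0 <= ((h == predo i)%:R : R) by rewrite ler0n.
  have d1 : ((h == predo i)%:R : R) <= 1 by case: (h == predo i); rewrite ?ler01 ?lexx.
  have e1 : (1 - t) * X i h * avoid X k h j <= X i h * avoid X k h j.
    rewrite -mulrA; apply: ler_piMl; [by apply: mulr_ge0 | lra].
  have e2 : t * (h == predo i)%:R * avoid X k h j <= t * (h == predo i)%:R.
    by apply: ler_piMr => //; apply: mulr_ge0.
  set a := avoid X k h j in e1 e2 *; set d := ((h == predo i)%:R : R) in e2 d0 d1 *.
  set x := X i h in e1 x0 *.
  have -> : ((1 - t) * x + t * d) * (a + k%:R * t) =
     (1 - t) * x * a + t * d * a + k%:R * t * ((1 - t) * x + t * d) by ring.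
  lra.
rewrite !big_split /= -!mulr_sumr.
have s1 : \sum_(h | h != j) ((h == predo i)%:R : R) <= 1.
  apply: (le_trans (sum_filter_le _ _)); first by move=> h; rewrite ler0n.
  have := sum_ind (predo i) (fun _ => (1 : R)).
  by under eq_bigr do rewrite mulr1; move=> ->.
have s2 : \sum_(h | h != j) pert X t i h <= 1.
  apply: (le_trans (sum_filter_le _ _)); first by case: hQ.
  by case: hQ => _ [-> _].
have kt : 0 <= k%:R * t by apply: mulr_ge0; rewrite ?ler0n.
rewrite -addn1 natrD mulrDl mul1r.
have := ler_wpM2l t0 s1; have := ler_wpM2l kt s2.
rewrite !mulr1; lra.
Qed.

Lemma predo_val (n : nat) (y : 'I_n) : (predo y : nat) = (y : nat).-1.
Proof. by []. Qed.

Lemma WQ_rec (R : realType) (n : nat) (X : 'M[R]_n) t k (y fi : 'I_n) :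
  0 <= t <= 1 -> line_strategy X -> y != fi ->
  W (pert X t) k.+1 y fi = (1 - t) * \sum_z X y z * W (pert X t) k z fi
                           + t * W (pert X t) k (predo y) fi.
Proof.
move=> ht hX hy; rewrite (W_rec _ (pert_strategy ht hX) hy); exact: sum_pert.
Qed.

Lemma W_pert_ge (R : realType) (n : nat) (X : 'M[R]_n) t k (y fi : 'I_n) :
  0 <= t <= 1 -> line_strategy X -> (fi : nat) = 0%N ->
  W X k y fi <= W (pert X t) k y fi.
Proof.
move=> ht hX hf; have /andP[t0 t1] := ht.
elim: k y => [|k IH] y.
  by rewrite /W.
case: (eqVneq y fi) => [->|hy]; first by rewrite !W_jj.
have hy1 : (1 <= (y : nat))%N.
  by move: hy; rewrite -val_eqE /= hf; case: (nat_of_ord y).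
rewrite (WQ_rec _ ht hX hy).
have s1 : \sum_z X y z * W X k z fi <= \sum_z X y z * W (pert X t) k z fi.
  by apply: ler_sum => z _; apply: ler_wpM2l; [case: hX | apply: IH].
have s2 : W X k.+1 y fi <= W X k (predo y) fi.
  apply: W_shift => //; rewrite ?predo_val ?hf /=; lia.
have s3 := IH (predo y).
rewrite (W_rec _ hX hy) in s2 *.
have := ler_wpM2l (_ : 0 <= 1 - t) s1.
move: s2 s3; set A := \sum_z _; set B := \sum_z _; move=> s2 s3 s4.
have : t * A <= t * W X k (predo y) fi by apply: ler_wpM2l.
have : t * W X k (predo y) fi <= t * W (pert X t) k (predo y) fi by apply: ler_wpM2l.
have : (1 - t) * A <= (1 - t) * B by apply: s4; lra.
lra.
Qed.

Lemma W_chain (R : realType) (n : nat) (X : 'M[R]_n) t k (fi : 'I_n) m :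
  0 <= t <= 1 -> line_strategy X -> (fi : nat) = 0%N ->
  forall y y' : 'I_n, (y : nat) = ((y' : nat) + m)%N ->
  t ^+ m * (W (pert X t) k y' fi - W X (k + m) y fi)
    <= W (pert X t) (k + m) y fi - W X (k + m) y fi.
Proof.
move=> ht hX hf; have /andP[t0 t1] := ht.
have hQ := pert_strategy ht hX.
elim: m => [|m IH] y y' hyy'.
  have -> : y = y' by apply: val_inj; rewrite /= hyy' addn0.
  by rewrite expr0 mul1r addn0.
have hy : y != fi by rewrite -val_eqE /= hf hyy' addnS.
have hp : (predo y : nat) = ((y' : nat) + m)%N by rewrite predo_val hyy' addnS.
have IHp := IH (predo y) y' hp.
rewrite addnS (WQ_rec _ ht hX hy) (W_rec _ hX hy).
have s2 : W X (k + m).+1 y fi <= W X (k + m) (predo y) fi.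
  by apply: W_shift => //; rewrite ?predo_val ?hf /=; lia.
rewrite (W_rec _ hX hy) in s2.
have s1 : \sum_z X y z * W X (k + m) z fi <= \sum_z X y z * W (pert X t) (k + m) z fi.
  by apply: ler_sum => z _; apply: ler_wpM2l; [case: hX | apply: W_pert_ge].
move: s1 s2 IHp.
set C := \sum_z X y z * W X (k + m) z fi.
set S := \sum_z _.
set A := W (pert X t) k y' fi.
set B := W X (k + m) (predo y) fi.
set D := W (pert X t) (k + m) (predo y) fi.
have s0 : 0 <= t ^+ m by apply: exprn_ge0.
have s1' : t ^+ m <= 1 by apply: exprn_ile1.
set s := t ^+ m in s0 s1' *.
move=> s1 s2 IHp.
rewrite exprS -/s.
have P1 : t * (s * (A - B)) <= t * (D - B) by apply: ler_wpM2l.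
have P2 : (1 - t) * C <= (1 - t) * S by apply: ler_wpM2l => //; lra.
have P3 : (t * (C - B)) * 1 <= (t * (C - B)) * s.
  apply: ler_wnM2l => //; apply: mulr_ge0_le0 => //; lra.
lra.
Qed.

Lemma hit_ge0 (R : realType) (n : nat) (X : 'M[R]_n) tau i j :
  line_strategy X -> 0 <= hit_le X tau i j.
Proof.
move=> hX; rewrite /hit_le; have /andP[a b] := avoid_bounds tau i j hX; lra.
Qed.

Lemma key (R : realType) (n : nat) (X : 'M[R]_n) tau (fi la : 'I_n) :
  line_strategy X -> (3 <= n)%N -> (n.-1 <= tau)%N ->
  (fi : nat) = 0%N -> (la : nat) = n.-1 ->
  hit_le X tau la fi < hit_le X tau fi la ->
  exists Q : 'M[R]_n, line_strategy Q /\ min_hit X tau < min_hit Q tau.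
Proof.
move=> hX hn ht hf hl hgf.
have ht1 : (1 <= tau)%N by lia.
set f := hit_le X tau fi la in hgf *.
set g := hit_le X tau la fi in hgf *.
have f1 : f <= 1 by apply: hit_le_1.
have g0 : 0 <= g by apply: hit_ge0.
have hT : 0 < tau%:R + 1 :> R by apply: ltr_wpDl; rewrite ?ler0n ?ltr01.
set t := (f - g) / (tau%:R + 1).
have htT : t * (tau%:R + 1) = f - g by rewrite /t divfK // gt_eqF.
have tpos : 0 < t by rewrite /t divr_gt0 // subr_gt0.
have tau0 : 0 <= tau%:R :> R by rewrite ler0n.
have tle1 : t <= 1.
  have : t * tau%:R >= 0 by apply: mulr_ge0 => //; apply: ltW.
  rewrite mulrDr mulr1 in htT; lra.
have ht01 : 0 <= t <= 1 by rewrite tle1 andbT ltW.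
have hQ := pert_strategy ht01 hX.
exists (pert X t); split => //.
have hlf : la != fi by rewrite -val_eqE /= hl hf; lia.
rewrite (min_hit_eq hX hn ht1 hf hl) (min_hit_eq hQ hn ht1 hf hl) -/f -/g.
have -> : Num.min f g = g by apply/min_idPr; apply: ltW.
rewrite lt_min; apply/andP; split.
  have := avoid_pert tau fi la ht01 hX.
  rewrite /f /hit_le; rewrite mulrDr mulr1 in htT.
  have : t * tau%:R >= 0 by apply: mulr_ge0 => //; apply: ltW.
  rewrite /f /g /hit_le in htT *; rewrite mulrC; lra.
rewrite /g !hit_W //.
have hc := W_chain (tau - n.-1) ht01 hX hf (m := n.-1) (y := la) (y' := fi) (_ : _).
rewrite W_jj subnK // in hc.
have hgW : W X tau la fi = g by rewrite /g hit_W.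
rewrite hgW in hc *.
have tm : 0 < t ^+ n.-1 by apply: exprn_gt0.
have : 0 < t ^+ n.-1 * (1 - g) by apply: mulr_gt0 => //; lra.
have hyy : (la : nat) = ((fi : nat) + n.-1)%N by rewrite hl hf.
have := hc hyy; lra.
Qed.

Theorem lemma6 (R : realType) (n : nat) (hn : (3 <= n)%N) (tau : nat)
    (htau1 : (n.-1 <= tau)%N) (htau2 : (tau <= 2 * n - 3)%N)
    (Pstar : 'M[R]_n) (hopt : optimal_line tau Pstar)
    (first last : 'I_n) (hfirst : val first = 0%N) (hlast : val last = n.-1) :
  hit_le Pstar tau first last = hit_le Pstar tau last first.
Proof.
case: hopt => hP hmax.
have ht1 : (1 <= tau)%N by lia.
have hf : (first : nat) = 0%N := hfirst.
have hl : (last : nat) = n.-1 := hlast.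
have e1 : rev_ord last = first by apply: val_inj => /=; lia.
have e2 : rev_ord first = last by apply: val_inj => /=; lia.
case: (ltgtP (hit_le Pstar tau first last) (hit_le Pstar tau last first)) => h //.
- have hr := revm_strategy hP.
  have [Q [hQ hlt]] : exists Q : 'M[R]_n, line_strategy Q /\ min_hit (revm Pstar) tau < min_hit Q tau.
    by apply: (key hr hn htau1 hf hl); rewrite !hit_rev e1 e2.
  have := hmax Q hQ.
  rewrite (min_hit_eq hr hn ht1 hf hl) !hit_rev e1 e2 in hlt.
  rewrite (min_hit_eq hP hn ht1 hf hl) minC.
  by rewrite leNgt hlt.
- have [Q [hQ hlt]] := key hP hn htau1 hf hl h.
  have := hmax Q hQ.
  by rewrite leNgt hlt.
Qed.
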